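(* Let the alphabet be countable, $\mathcal S$ the set of sentences, $\widehat{\mathcal I}$ the set of separating interpretations, and $\widehat{\mathcal B}$ the Borel $\sigma$-algebra on $\widehat{\mathcal I}$. Let $\mu:\mathcal S\to\mathbb R$ be a Gaifman probability on sentences. Then there exists a unique (countably additive) probability measure $\widehat\mu^*:\widehat{\mathcal B}\to\mathbb R$ such that $\widehat\mu^*(\widehat{\mathrm{Mod}}(\varphi))=\mu(\varphi)$ for each $\varphi\in\mathcal S$.
   Context: Setting: higher-order logic (Church's simple theory of types, without a description operator), with Henkin semantics: an interpretation $I$ consists of domains $D_\alpha$ ($D_o=\{\mathsf T,\mathsf F\}$, $D_{\alpha\to\beta}$ a set of functions) and a valuation of constants (equality denoting identity) such that every term has a denotation; $V(t,I)$ is the denotation of a closed term $t$. An alphabet is countable if its set of constants is countable. Sentences are closed terms of type $o$; a sentence is valid if true in every interpretation. $I$ is separating if for every pair $r,s$ of closed terms of the same function type $\alpha\to\beta$ with $V(r,I)\neq V(s,I)$ there is a closed term $t$ of type $\alpha$ (over the alphabet) with $V((r\,t),I)\neq V((s\,t),I)$. $\widehat{\mathrm{Mod}}(\varphi)=\{I\in\widehat{\mathcal I}:\varphi\text{ is valid in }I\}$; these sets form a basis of a topology on $\widehat{\mathcal I}$ and $\widehat{\mathcal B}$ is its Borel $\sigma$-algebra. A probability on sentences is a non-negative $\mu:\mathcal S\to\mathbb R$ with $\mu(\varphi)=1$ for valid $\varphi$ and $\mu(\varphi\vee\psi)=\mu(\varphi)+\mu(\psi)$ whenever $\neg(\varphi\wedge\psi)$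 is valid. $\mu$ is Gaifman if for every pair $r,s$ of closed terms of the same function type $\alpha\to\beta$, $\mu(r=s)=\inf_{\{t_1,\dots,t_n\}}\mu(\bigwedge_{i=1}^n((r\,t_i)=(s\,t_i)))$ over all finite sets of closed terms of type $\alpha$. *)

(* Defs.v *)
From Stdlib Require Import Reals List.
Open Scope R_scope.

Set Implicit Arguments.

(** Types over a set [B] of base type symbols; [TBool] is the type [o]. *)
Inductive ty (B : Type) : Type :=
| TBase : B -> ty B
| TBool : ty B
| TArr : ty B -> ty B -> ty B.
Arguments TBool {B}.

Inductive var {B : Type} : list (ty B) -> ty B -> Type :=
| Vz : forall G a, var (a :: G) a
| Vs : forall G a b, var G a -> var (b :: G) a.

Section Syntax.
Variables (B C : Type) (cty : C -> ty B).

Inductive tm (G : list (ty B)) : ty B -> Type :=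
| Var : forall a, var G a -> tm G a
| Con : forall c : C, tm G (cty c)
| EqC : forall a, tm G (TArr a (TArr a TBool))
| NegC : tm G (TArr TBool TBool)
| OrC : tm G (TArr TBool (TArr TBool TBool))
| AndC : tm G (TArr TBool (TArr TBool TBool))
| PiC : forall a, tm G (TArr (TArr a TBool) TBool)
| App : forall a b, tm G (TArr a b) -> tm G a -> tm G b
| Lam : forall a b, tm (a :: G) b -> tm G (TArr a b).

Definition ctm (a : ty B) := tm nil a.
Definition sentence := tm nil TBool.

Definition tEq {G a} (s t : tm G a) : tm G TBool := App (App (EqC G a) s) t.
Definition tNeg {G} (s : tm G TBool) : tm G TBool := App (NegC G) s.
Definition tOr {G} (s t : tm G TBool) : tm G TBool := App (App (OrC G) s) t.
Definition tAnd {G} (s t : tm G TBool) : tm G TBool := App (App (AndC G) s) t.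
(** A fixed valid sentence, used as the empty conjunction. *)
Definition tTop : sentence := tEq (NegC nil) (NegC nil).
Fixpoint bigAnd (l : list sentence) : sentence :=
  match l with nil => tTop | s :: l' => tAnd s (bigAnd l') end.

Fixpoint env (D : ty B -> Type) (G : list (ty B)) : Type :=
  match G with nil => unit | a :: G' => (D a * env D G')%type end.

Fixpoint lookup (D : ty B -> Type) G a (v : var G a) : env D G -> D a :=
  match v in var G a return env D G -> D a with
  | Vz G a => fun e => fst e
  | Vs _ v' => fun e => lookup D v' (snd e)
  end.

(** A Henkin interpretation: domains [D a] (nonempty on base types), with
    [D o] identified with the truth values via the bijection [tv], and
    [D (a -> b)] a set of functions [D a -> D b], presented extensionally
    through the application map [app]; a valuation [cval] of the constants;
    and the (necessarily unique) denotation function [den] satisfying the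
    usual clauses, whose existence expresses that every term has a
    denotation. *)
Record interp : Type := {
  D : ty B -> Type;
  D_base_ne : forall b, inhabited (D (TBase b));
  tv : D TBool -> bool;
  tv_inj : forall x y, tv x = tv y -> x = y;
  tv_surj : forall b, exists x, tv x = b;
  app : forall a b, D (TArr a b) -> D a -> D b;
  app_ext : forall a b (f g : D (TArr a b)), (forall x, app f x = app g x) -> f = g;
  cval : forall c : C, D (cty c);
  den : forall G a, tm G a -> env D G -> D a;
  den_var : forall G a (v : var G a) e, den (Var v) e = lookup D v e;
  den_con : forall G c e, den (Con G c) e = cval c;
  den_app : forall G a b (s : tm G (TArr a b)) (t : tm G a) e,
      den (App s t) e = app (den s e) (den t e);
  den_lam : forall G a b (t : tm (a :: G) b) e x,
      app (den (Lam t) e) x = den t (x, e);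
  den_eq : forall G a e (x y : D a),
      tv (app (app (den (EqC G a) e) x) y) = true <-> x = y;
  den_neg : forall G e x, tv (app (den (NegC G) e) x) = negb (tv x);
  den_or : forall G e x y,
      tv (app (app (den (OrC G) e) x) y) = orb (tv x) (tv y);
  den_and : forall G e x y,
      tv (app (app (den (AndC G) e) x) y) = andb (tv x) (tv y);
  den_pi : forall G a e (f : D (TArr a TBool)),
      tv (app (den (PiC G a) e) f) = true <-> forall x, tv (app f x) = true
}.

Definition V (I : interp) {a} (t : ctm a) : D I a := den I t tt.

Definition true_in (I : interp) (phi : sentence) : Prop := tv I (V I phi) = true.

Definition valid (phi : sentence) : Prop := forall I : interp, true_in I phi.

Definition separating (I : interp) : Prop :=
  forall a b (r s : ctm (TArr a b)), V I r <> V I s ->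
    exists t : ctm a, V I (App r t) <> V I (App s t).

Definition sep_interp : Type := { I : interp | separating I }.

Definition Mod (phi : sentence) : sep_interp -> Prop :=
  fun I => true_in (proj1_sig I) phi.

Definition hat_open (U : sep_interp -> Prop) : Prop :=
  exists F : sentence -> Prop, forall I, U I <-> exists phi, F phi /\ Mod phi I.

Definition prob_on_sentences (mu : sentence -> R) : Prop :=
  (forall phi, 0 <= mu phi) /\
  (forall phi, valid phi -> mu phi = 1) /\
  (forall phi psi, valid (tNeg (tAnd phi psi)) -> mu (tOr phi psi) = mu phi + mu psi).

(** Gaifman condition: [mu (r = s)] is the infimum, over finite families
    [t_1, ..., t_n] of closed terms, of [mu (/\_i (r t_i = s t_i))]
    (the empty conjunction being the valid sentence [tTop]). *)
Definition gaifman (mu : sentence -> R) : Prop :=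
  forall a b (r s : ctm (TArr a b)),
    let conj l := bigAnd (map (fun t => tEq (App r t) (App s t)) l) in
    (forall l : list (ctm a), mu (tEq r s) <= mu (conj l)) /\
    (forall eps, 0 < eps -> exists l : list (ctm a), mu (conj l) < mu (tEq r s) + eps).

End Syntax.

Definition is_sigma_algebra {X : Type} (S : (X -> Prop) -> Prop) : Prop :=
  S (fun _ => True) /\
  (forall A, S A -> S (fun x => ~ A x)) /\
  (forall F : nat -> X -> Prop, (forall n, S (F n)) -> S (fun x => exists n, F n x)).

Definition sigma_gen {X : Type} (G : (X -> Prop) -> Prop) : (X -> Prop) -> Prop :=
  fun A => forall S, is_sigma_algebra S -> (forall U, G U -> S U) -> S A.

Definition is_prob_measure {X : Type} (S : (X -> Prop) -> Prop) (P : (X -> Prop) -> R) : Prop :=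
  (forall A, S A -> 0 <= P A) /\
  P (fun _ => True) = 1 /\
  (forall F : nat -> X -> Prop,
      (forall n, S (F n)) ->
      (forall m n x, m <> n -> F m x -> F n x -> False) ->
      infinite_sum (fun n => P (F n)) (P (fun x => exists n, F n x))).

Definition hat_borel {B C : Type} (cty : C -> ty B) : (sep_interp cty -> Prop) -> Prop :=
  sigma_gen (@hat_open B C cty).

Definition countable (T : Type) : Prop := exists f : T -> nat, forall x y, f x = f y -> x = y.
Arguments hat_borel {B C} cty _.

(* Main.v *)
Require Import Defs.
From Stdlib Require Import Reals List.
Open Scope R_scope.

Module Meas.
From Stdlib Require Import Reals Lia.
From mathcomp Require Import all_boot all_order all_algebra.
From mathcomp Require Import all_classical all_reals all_analysis.
From mathcomp Require Import Rstruct Rstruct_topology.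
Import Order.TTheory GRing.Theory Num.Theory.
Local Open Scope classical_set_scope.
Local Open Scope ring_scope.

Definition Meas (A : R -> Prop) : Prop := @measurable _ (measurableTypeR R) A.
Definition U01 (x : R) : Prop := Rle 0 x /\ Rlt x 1.
Definition lam (A : R -> Prop) : R :=
  fine (@lebesgue_measure R (fun x => A x /\ U01 x)).

Lemma set_ext (A B : R -> Prop) : (forall x, A x <-> B x) -> A = B.
Proof. by move=> h; apply: funext => x; apply: propext. Qed.

Lemma U01_itv : U01 = ([set` `[0%R, 1%R[] : set R).
Proof.
apply: set_ext => x; rewrite /U01 /= in_itv /=.
by split=> [[/RleP -> /RltP ->]|/andP[/RleP ? /RltP ?]].
Qed.

Lemma itv_eq (a b : R) : (fun x => Rle a x /\ Rlt x b) = ([set` `[a, b[] : set R).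
Proof.
apply: set_ext => x; rewrite /= in_itv /=.
by split=> [[/RleP -> /RltP ->]|/andP[/RleP ? /RltP ?]].
Qed.

Lemma Meas_ext (A B : R -> Prop) : (forall x, A x <-> B x) -> Meas A -> Meas B.
Proof. by move=> /set_ext ->. Qed.

Lemma Meas_itv a b : Meas (fun x => Rle a x /\ Rlt x b).
Proof. rewrite /Meas itv_eq; exact: measurable_itv. Qed.

Lemma Meas_U01 : Meas U01.
Proof. rewrite /Meas U01_itv; exact: measurable_itv. Qed.

Lemma Meas_True : Meas (fun _ => True).
Proof. exact: measurableT. Qed.

Lemma Meas_not A : Meas A -> Meas (fun x => ~ A x).
Proof. move=> h; have H := measurableC h; exact H. Qed.

Lemma Meas_or A B : Meas A -> Meas B -> Meas (fun x => A x \/ B x).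
Proof. move=> ha hb; have H := measurableU _ _ ha hb; exact H. Qed.

Lemma Meas_and A B : Meas A -> Meas B -> Meas (fun x => A x /\ B x).
Proof. move=> ha hb; have H := measurableI _ _ ha hb; exact H. Qed.

Lemma Meas_ex (F : nat -> R -> Prop) : (forall n, Meas (F n)) -> Meas (fun x => exists n, F n x).
Proof.
move=> h; have -> : (fun x => exists n, F n x) = \bigcup_n (F n : set R).
  by apply: set_ext => x; split=> [[n ?]|[n _ ?]]; [exists n|exists n].
rewrite /Meas; apply: bigcup_measurable => n _; exact: h.
Qed.

Lemma Meas_all (F : nat -> R -> Prop) : (forall n, Meas (F n)) -> Meas (fun x => forall n, F n x).
Proof.
move=> h; apply: (@Meas_ext (fun x => ~ exists n, ~ F n x)); last first.
  by apply: Meas_not; apply: Meas_ex => n; exact: Meas_not.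
move=> x; split=> [H n|H [n hn]]; last exact: hn.
by case: (pselect (F n x)) => // hn; case: H; exists n.
Qed.


Lemma lam_ext (A B : R -> Prop) : (forall x, A x <-> B x) -> lam A = lam B.
Proof. by move=> /set_ext ->. Qed.

Local Notation mu := (@lebesgue_measure R).

Lemma mI A : Meas A -> Meas (fun x => A x /\ U01 x).
Proof. move=> h; exact: (Meas_and _ _ h Meas_U01). Qed.

Lemma mu_fin A : Meas A -> (mu (fun x => A x /\ U01 x) \is a fin_num)%E.
Proof.
move=> h; rewrite ge0_fin_numE //.
apply: (le_lt_trans (y := mu U01)).
  apply: le_measure; rewrite ?inE //; [exact: mI|exact: Meas_U01|by move=> x []].
by rewrite U01_itv lebesgue_measure_itv /= lte_fin ltr01 -EFinB ltry.
Qed.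

Lemma lam_ge0 A : Rle 0 (lam A).
Proof. apply/RleP; rewrite /lam; exact: fine_ge0. Qed.

Lemma lam_mono A B : Meas A -> Meas B -> (forall x, A x -> B x) -> Rle (lam A) (lam B).
Proof.
move=> ha hb hab; apply/RleP; rewrite /lam; apply: fine_le; try exact: mu_fin.
apply: le_measure; rewrite ?inE; [exact: mI|exact: mI|by move=> x [/hab ? ?]].
Qed.

Lemma lam_itv a b : Rle 0 a -> Rle a b -> Rle b 1 -> lam (fun x => Rle a x /\ Rlt x b) = Rminus b a.
Proof.
move=> /RleP h0 /RleP hab /RleP hb1; rewrite /lam.
have -> : (fun x => (Rle a x /\ Rlt x b) /\ U01 x) = ([set` `[a, b[] : set R).
  rewrite -itv_eq; apply: set_ext => x; rewrite /U01; split; first by case.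
  move=> [h1 h2]; split; first by split.
  split; first by apply/RleP; apply: (le_trans h0); exact/RleP.
  by apply/RltP; apply: (lt_le_trans (y := b)) => //; exact/RltP.
rewrite lebesgue_measure_itv /=; case: ifPn => [|].
  by [].
rewrite lte_fin -leNgt => hba /=.
have E : b = a by apply/eqP; rewrite eq_le hab hba.
by rewrite E; exact: (esym (Rminus_diag_eq a a erefl)).
Qed.

Lemma lam_total : lam (fun _ => True) = 1%R.
Proof.
rewrite /lam; have -> : (fun x => True /\ U01 x) = ([set` `[0%R, 1%R[] : set R).
  by rewrite -U01_itv; apply: set_ext => x; split=> [[]|].
by rewrite lebesgue_measure_itv /= lte_fin ltr01 /= subr0.
Qed.

Lemma lam_add A B : Meas A -> Meas B -> (forall x, A x -> B x -> False) ->
  lam (fun x => A x \/ B x) = Rplus (lam A) (lam B).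
Proof.
move=> ha hb hd; rewrite /lam.
have -> : (fun x => (A x \/ B x) /\ U01 x) =
  ((fun x => A x /\ U01 x) `|` (fun x => B x /\ U01 x) : set R).
  by apply: set_ext => x; rewrite /setU /=; tauto.
rewrite measureU; [|exact: mI|exact: mI|].
  by rewrite fineD //; exact: mu_fin.
by apply/seteqP; split=> // x [[h1 _] [h2 _]]; exact: (hd x h1 h2).
Qed.

Lemma lam_sigma (F : nat -> R -> Prop) : (forall n, Meas (F n)) ->
  (forall m n x, m <> n -> F m x -> F n x -> False) ->
  infinite_sum (fun n => lam (F n)) (lam (fun x => exists n, F n x)).
Proof.
move=> hm hd.
pose G n : set (measurableTypeR R) := (fun x => F n x /\ U01 x).
have Gm n : Meas (G n) by exact: (mI _ (hm n)).
have Gd : trivIset setT G.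
  move=> i j _ _ [x [[h1 _] [h2 _]]]; apply/eqP; apply/negPn/negP => /eqP hij.
  exact: (hd _ _ _ hij h1 h2).
have UE : (fun x => (exists n, F n x) /\ U01 x) = \bigcup_n G n.
  apply: set_ext => x; split=> [[[n ?] ?]|[n _ [? ?]]]; first by exists n.
  by split=> //; exists n.
have finU : (mu (fun x => (exists n, F n x) /\ U01 x) \is a fin_num)%E by apply: mu_fin; exact: Meas_ex.
have fin n : (mu (G n) \is a fin_num)%E by exact: mu_fin.
have hs n : (\sum_(0 <= i < n) mu (G i))%E = ((\sum_(0 <= i < n) fine (mu (G i)))%:E).
  by rewrite EFin_sum_fine //= => i _; exact: fin.
have E : (fun n => (\sum_(0 <= i < n) mu (G i))%E) = (fun n => (\sum_(0 <= i < n) fine (mu (G i)))%:E).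
  by apply: funext => n; rewrite hs.
have hcv : (fun n => (\sum_(0 <= i < n) fine (mu (G i)))%:E) @ \oo --> mu (fun x => (exists n, F n x) /\ U01 x).
  rewrite -E UE; apply: measure_semi_sigma_additive => //.
  apply: bigcup_measurable => n _; exact: Gm.
move: hcv.
rewrite -(fineK finU) => /fine_cvgP [_ hc].
move=> eps /RltP heps.
move/cvgrPdist_lt : hc => /(_ eps heps) [N _ hN].
exists N => n hn; rewrite /R_dist.
have : `|fine (mu (fun x => (exists n0, F n0 x) /\ U01 x)) - \sum_(0 <= i < n.+1) fine (mu (G i))| < eps.
  apply: hN; rewrite /=; apply/ssrnat.leP; lia.
rewrite /lam distrC; have -> : sum_f_R0 (fun n0 => fine (mu (fun x => F n0 x /\ U01 x))) n =
   \sum_(0 <= i < n.+1) fine (mu (G i)).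
  elim: n {hn} => [|n IH]; first by rewrite big_nat1.
  by rewrite big_nat_recr //= -IH.
by move/RltP.
Qed.

Lemma lam_null_union (F : nat -> R -> Prop) : (forall n, Meas (F n)) ->
  (forall n, lam (F n) = 0%R) -> lam (fun x => exists n, F n x) = 0%R.
Proof.
move=> hm h0.
pose G n : set (measurableTypeR R) := (fun x => F n x /\ U01 x).
have Gm n : Meas (G n) by exact: (mI _ (hm n)).
have G0 n : mu (G n) = 0%E.
  by rewrite -(fineK (mu_fin _ (hm n))); have := h0 n; rewrite /lam => ->.
have UE : (fun x => (exists n, F n x) /\ U01 x) = \bigcup_n G n.
  apply: set_ext => x; split=> [[[n ?] ?]|[n _ [? ?]]]; first by exists n.
  by split=> //; exists n.
rewrite /lam UE.
have : (mu (\bigcup_n G n) <= \sum_(0 <= i <oo) mu (G i))%E.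
  apply: measure_sigma_subadditive => //; apply: bigcup_measurable => n _; exact: Gm.
rewrite (_ : (\sum_(0 <= i <oo) mu (G i))%E = 0%E); last first.
  by rewrite (eq_eseriesr (fun n _ => G0 n)) eseries0.
move=> hle; have -> : mu (\bigcup_n G n) = 0%E.
  by apply/eqP; rewrite eq_le hle measure_ge0.
by [].
Qed.

Lemma lam_restrict A : lam (fun x => U01 x /\ A x) = lam A.
Proof. rewrite /lam; congr (fine (mu _)); apply: set_ext => x; tauto. Qed.

End Meas.

From Stdlib Require Import Reals List Classical ClassicalEpsilon ProofIrrelevance
  FunctionalExtensionality PropExtensionality Eqdep Cantor Lia Lra.

Unset Asymmetric Patterns.
Set Bullet Behavior "Strict Subproofs".
Section Gen.
Variable X : Type.

Lemma pred_ext (A B : X -> Prop) : (forall x, A x <-> B x) -> A = B.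
Proof.
  intros H. apply functional_extensionality. intros x. apply propositional_extensionality. auto.
Qed.

Lemma sumc c n : sum_f_R0 (fun _ => c) n = INR (S n) * c.
Proof.
  induction n; simpl sum_f_R0. simpl; ring. rewrite IHn. rewrite (S_INR (S n)). ring.
Qed.

Lemma const_sum0 c : infinite_sum (fun _ => c) c -> c = 0.
Proof.
  intros H. apply NNPP. intros Hc.
  assert (Hp : 0 < Rabs c) by (apply Rabs_pos_lt; auto).
  destruct (H _ Hp) as [N HN]. specialize (HN (S N) ltac:(lia)).
  unfold R_dist in HN. rewrite sumc in HN.
  replace (INR (S (S N)) * c - c) with (INR (S N) * c) in HN by (rewrite (S_INR (S N)); ring).
  rewrite Rabs_mult, (Rabs_pos_eq (INR (S N))) in HN by apply pos_INR.
  assert (1 <= INR (S N)) by (rewrite S_INR; pose proof (pos_INR N); lra).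
  nra.
Qed.

Lemma sum_eventually (f : nat -> R) : (forall n, (2 <= n)%nat -> f n = 0) ->
  infinite_sum f (f 0%nat + f 1%nat).
Proof.
  intros H eps He. exists 1%nat. intros n Hn.
  assert (E : forall m, sum_f_R0 f (S m) = f 0%nat + f 1%nat).
  { induction m. simpl. ring. simpl sum_f_R0. simpl sum_f_R0 in IHm. rewrite IHm.
    rewrite (H (S (S m))) by lia. ring. }
  destruct n; [lia|]. rewrite E. unfold R_dist. rewrite Rminus_diag, Rabs_R0. auto.
Qed.

Definition Empty : X -> Prop := fun x => ~ True.

Section PM.
Variables (Sg : (X -> Prop) -> Prop) (M : (X -> Prop) -> R).
Hypothesis HS : is_sigma_algebra Sg.
Hypothesis HM : is_prob_measure Sg M.

Lemma S_empty : Sg Empty.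
Proof. destruct HS as [H1 [H2 _]]. apply H2. auto. Qed.

Lemma M_empty : M Empty = 0.
Proof.
  destruct HM as [_ [_ H]].
  specialize (H (fun _ => Empty) (fun _ => S_empty)).
  assert (E : (fun x => exists n : nat, Empty x) = Empty).
  { apply pred_ext. intros x; split. intros [_ h]; auto. intros h; exists O; auto. }
  cbv beta in H. rewrite E in H. apply const_sum0.
  exact (H (fun m n x _ h _ => h I)).
Qed.

Definition two (A B : X -> Prop) : nat -> X -> Prop :=
  fun n => match n with O => A | S O => B | _ => Empty end.

Lemma two_union A B : (fun x => exists n, two A B n x) = (fun x => A x \/ B x).
Proof.
  apply pred_ext. intros x; split.
  - intros [[|[|n]] h]; simpl in h; auto. exfalso; apply h; auto.
  - intros [h|h]; [exists O|exists (S O)]; auto.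
Qed.

Lemma M_two A B : Sg A -> Sg B -> (forall x, A x -> B x -> False) ->
  infinite_sum (fun n => M (two A B n)) (M (fun x => A x \/ B x)).
Proof.
  intros hA hB hd. destruct HM as [_ [_ H]]. rewrite <- two_union. apply H.
  - intros [|[|n]]; simpl; auto. apply S_empty.
  - intros [|[|m]] [|[|n]] x hmn h1 h2; simpl in *;
    try (exfalso; apply h1; exact I); try (exfalso; apply h2; exact I);
    try (exfalso; apply hmn; reflexivity); eapply hd; eauto.
Qed.

Lemma M_add A B : Sg A -> Sg B -> (forall x, A x -> B x -> False) ->
  M (fun x => A x \/ B x) = M A + M B.
Proof.
  intros hA hB hd. apply (uniqueness_sum (fun n => M (two A B n))).
  - apply M_two; auto.
  - apply (sum_eventually (fun n => M (two A B n))).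
    intros [|[|n]] Hn; try lia. simpl. apply M_empty.
Qed.

Lemma M_compl A : Sg A -> M (fun x => ~ A x) = 1 - M A.
Proof.
  intros hA. destruct HS as [H1 [H2 _]]. destruct HM as [_ [HT _]].
  assert (E : (fun x => A x \/ ~ A x) = (fun _ => True)).
  { apply pred_ext. intros x; split; auto. intros _; apply classic. }
  assert (H := M_add A (fun x => ~ A x) hA (H2 _ hA) ltac:(auto)).
  cbv beta in H. rewrite E, HT in H. lra.
Qed.
End PM.

Lemma min_ex (P : nat -> Prop) : (exists n, P n) -> exists n, P n /\ forall k, (k < n)%nat -> ~ P k.
Proof.
  intros [n Hn]. apply NNPP. intros H.
  assert (A : forall m k, (k <= m)%nat -> ~ P k).
  { induction m; intros k Hk Pk.
    - assert (k = O) by lia. subst. apply H. exists O. split; auto. intros; lia.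
    - destruct (Nat.eq_dec k (S m)) as [->|Hne].
      + apply H. exists (S m). split; auto. intros j Hj. apply IHm. lia.
      + apply (IHm k); auto. lia. }
  apply (A n n); auto.
Qed.

Definition lsys (L : (X -> Prop) -> Prop) : Prop :=
  L (fun _ => True) /\ (forall A, L A -> L (fun x => ~ A x)) /\
  (forall F : nat -> X -> Prop, (forall n, L (F n)) ->
     (forall m n x, m <> n -> F m x -> F n x -> False) -> L (fun x => exists n, F n x)).

Section Dyn.
Variable Pi : (X -> Prop) -> Prop.
Hypothesis Pi_int : forall A B, Pi A -> Pi B -> Pi (fun x => A x /\ B x).

Definition L0 (A : X -> Prop) : Prop :=
  forall L, lsys L -> (forall B, Pi B -> L B) -> L A.

Lemma L0_lsys : lsys L0.
Proof.
  split; [|split].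
  - intros L [H _] _; auto.
  - intros A HA L HL HP. apply HL. apply HA; auto.
  - intros F HF Hd L HL HP. apply HL; auto. intros n; apply HF; auto.
Qed.

Lemma L0_Pi A : Pi A -> L0 A.
Proof. intros HA L _ HP; auto. Qed.

Lemma L0_empty : L0 Empty.
Proof. destruct L0_lsys as [H1 [H2 _]]. apply H2; auto. Qed.

Lemma L0_two A B : L0 A -> L0 B -> (forall x, A x -> B x -> False) -> L0 (fun x => A x \/ B x).
Proof.
  intros hA hB hd. rewrite <- two_union. destruct L0_lsys as [_ [_ H3]]. apply H3.
  - intros [|[|n]]; simpl; auto. apply L0_empty.
  - intros [|[|m]] [|[|n]] x hmn h1 h2; simpl in *;
    try (exfalso; apply h1; exact I); try (exfalso; apply h2; exact I);
    try (exfalso; apply hmn; reflexivity); eapply hd; eauto.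
Qed.

Lemma lsys_inter A : L0 A -> lsys (fun B => L0 (fun x => A x /\ B x)).
Proof.
  intros hA. destruct L0_lsys as [H1 [H2 H3]]. split; [|split].
  - replace (fun x => A x /\ True) with A; auto. apply pred_ext; tauto.
  - intros B hB.
    replace (fun x => A x /\ ~ B x) with (fun x => ~ ((~ A x) \/ (A x /\ B x))).
    + apply H2. apply L0_two; auto. intros x h1 [h2 _]; auto.
    + apply pred_ext. intros x. destruct (classic (A x)); destruct (classic (B x)); tauto.
  - intros F hF hd.
    replace (fun x => A x /\ exists n, F n x) with (fun x => exists n, A x /\ F n x).
    + apply H3; auto. intros m n x hmn [_ h1] [_ h2]; eauto.
    + apply pred_ext. intros x; split. intros [n [h1 h2]]; split; eauto.
      intros [h1 [n h2]]; eauto.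
Qed.

Lemma L0_int A B : L0 A -> L0 B -> L0 (fun x => A x /\ B x).
Proof.
  intros hA hB.
  assert (Step1 : forall A', Pi A' -> forall B', L0 B' -> L0 (fun x => A' x /\ B' x)).
  { intros A' hA' B' hB'. apply (hB' (fun B => L0 (fun x => A' x /\ B x))).
    - apply lsys_inter. apply L0_Pi; auto.
    - intros B0 hB0. apply L0_Pi. apply Pi_int; auto. }
  apply (hA (fun A => L0 (fun x => A x /\ B x))).
  - replace (fun A => L0 (fun x => A x /\ B x)) with (fun A => L0 (fun x => B x /\ A x)).
    + apply lsys_inter; auto.
    + apply functional_extensionality; intros A0. f_equal. apply pred_ext; tauto.
  - intros A0 hA0. apply Step1; auto.
Qed.

Lemma L0_sigma : is_sigma_algebra L0.
Proof.
  destruct L0_lsys as [H1 [H2 H3]]. split; [auto|split; [auto|]].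
  intros F hF.
  set (H := fun n x => exists k, (k < n)%nat /\ F k x).
  assert (hH : forall n, L0 (H n)).
  { induction n.
    - replace (H O) with Empty. apply L0_empty. apply pred_ext. intros x; split.
      intros h; exfalso; apply h; auto. intros [k [hk _]]; lia.
    - replace (H (S n)) with (fun x => ~ (~ H n x /\ ~ F n x)).
      + apply H2. apply L0_int; apply H2; auto.
      + apply pred_ext. intros x. unfold H. split.
        * intros h. apply NNPP. intros h'. apply h. split.
          -- intros [k [hk hk']]. apply h'. exists k. split; auto; lia.
          -- intros hf. apply h'. exists n. split; auto.
        * intros [k [hk hk']] [h1 h2]. destruct (Nat.eq_dec k n) as [->|hne]; auto.
          apply h1. exists k. split; auto. lia. }
  set (G := fun n x => F n x /\ ~ H n x).
  replace (fun x => exists n, F n x) with (fun x => exists n, G n x).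
  - apply H3.
    + intros n. apply L0_int; auto.
    + intros m n x hmn [h1 h2] [h3 h4].
      destruct (Nat.lt_total m n) as [hl|[he|hl]]; auto.
      * apply h4. exists m. auto.
      * apply h2. exists n. auto.
  - apply pred_ext. intros x; split.
    + intros [n [h _]]; eauto.
    + intros hx. destruct (min_ex (fun n => F n x) hx) as [n [hn hmin]].
      exists n. split; auto. intros [k [hk hk']]. apply (hmin k hk hk').
Qed.

Lemma dynkin (L : (X -> Prop) -> Prop) : lsys L -> (forall A, Pi A -> L A) ->
  forall A, sigma_gen Pi A -> L A.
Proof.
  intros HL HP A HA. apply (HA L0 L0_sigma L0_Pi); auto.
Qed.
End Dyn.

Lemma sigma_gen_sigma (G : (X -> Prop) -> Prop) : is_sigma_algebra (sigma_gen G).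
Proof.
  split; [|split].
  - intros S' [h _] _; auto.
  - intros A hA S' hS hG. apply hS. apply hA; auto.
  - intros F hF S' hS hG. apply hS. intros n; apply hF; auto.
Qed.

Lemma sigma_gen_base (G : (X -> Prop) -> Prop) A : G A -> sigma_gen G A.
Proof. intros h S' _ hG; auto. Qed.

End Gen.


Set Bullet Behavior "Strict Subproofs".

Section Syn.
Variables (B C : Type) (cty : C -> ty B).

Notation tm := (tm cty).
Notation ctm := (ctm cty).
Notation sentence := (sentence cty).
Notation interp := (interp cty).
Notation Top := (@tTop B C cty).
Notation ap I f x := (Defs.app I _ _ f x).

Definition ren_t (G G' : list (ty B)) := forall a, var G a -> var G' a.
Definition sub_t (G G' : list (ty B)) := forall a, var G a -> tm G' a.

Definition lift_r {G G'} (b : ty B) (r : ren_t G G') : ren_t (b :: G) (b :: G') :=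
  fun a v =>
  match v in var L a0 return
    (match L with nil => unit | c :: L' => ren_t L' G' -> var (c :: G') a0 end) with
  | Vz _ _ => fun _ => Vz _ _
  | Vs _ v' => fun r => Vs _ (r _ v')
  end r.

Fixpoint ren {G G'} (r : ren_t G G') {a} (t : tm G a) {struct t} : tm G' a :=
  match t in Defs.tm _ _ a0 return tm G' a0 with
  | Var _ v => Var cty (r _ v)
  | Con _ _ c => Con cty G' c
  | EqC _ _ a => EqC cty G' a
  | NegC _ _ => NegC cty G'
  | OrC _ _ => OrC cty G'
  | AndC _ _ => AndC cty G'
  | PiC _ _ a => PiC cty G' a
  | App s u => App (ren r s) (ren r u)
  | Lam t => Lam (ren (lift_r _ r) t)
  end.

Definition shift {G} (b : ty B) : ren_t G (b :: G) := fun a v => Vs b v.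

Definition lift_s {G G'} (b : ty B) (s : sub_t G G') : sub_t (b :: G) (b :: G') :=
  fun a v =>
  match v in var L a0 return
    (match L with nil => unit | c :: L' => sub_t L' G' -> tm (c :: G') a0 end) with
  | Vz _ _ => fun _ => Var cty (Vz _ _)
  | Vs _ v' => fun s => ren (shift _) (s _ v')
  end s.

Fixpoint subst {G G'} (s : sub_t G G') {a} (t : tm G a) {struct t} : tm G' a :=
  match t in Defs.tm _ _ a0 return tm G' a0 with
  | Var _ v => s _ v
  | Con _ _ c => Con cty G' c
  | EqC _ _ a => EqC cty G' a
  | NegC _ _ => NegC cty G'
  | OrC _ _ => OrC cty G'
  | AndC _ _ => AndC cty G'
  | PiC _ _ a => PiC cty G' a
  | App s' u => App (subst s s') (subst s u)
  | Lam t => Lam (subst (lift_s _ s) t)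
  end.

Section Sem.
Variable I : interp.

Fixpoint env_of (G : list (ty B)) : (forall a, var G a -> D I a) -> env (D I) G :=
  match G return (forall a, var G a -> D I a) -> env (D I) G with
  | nil => fun _ => tt
  | b :: G' => fun h => (h b (Vz G' b), env_of G' (fun a v => h a (Vs b v)))
  end.

Lemma lookup_env_of G a (v : var G a) h : lookup (D I) v (env_of G h) = h a v.
Proof. induction v; simpl; auto. Qed.

Lemma env_of_ext G (h h' : forall a, var G a -> D I a) :
  (forall a v, h a v = h' a v) -> env_of G h = env_of G h'.
Proof.
  revert h h'; induction G; intros h h' H; simpl; auto.
  f_equal; [apply H | apply IHG; intros; apply H].
Qed.

Lemma env_of_lookup G (e : env (D I) G) : env_of G (fun a v => lookup (D I) v e) = e.
Proof.
  induction G; simpl; destruct e; auto. f_equal. apply IHG.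
Qed.

Lemma tv_eq_true (x y : D I TBool) : tv I x = tv I y -> x = y.
Proof. apply tv_inj. Qed.

Lemma den_EqC G G' a e e' : den I (EqC cty G a) e = den I (EqC cty G' a) e'.
Proof.
  apply app_ext; intro x. apply app_ext; intro y. apply tv_inj.
  pose proof (den_eq I G a e x y) as H1. pose proof (den_eq I G' a e' x y) as H2.
  destruct (tv I (ap I (ap I (den I (EqC cty G a) e) x) y)) eqn:E1;
  destruct (tv I (ap I (ap I (den I (EqC cty G' a) e') x) y)) eqn:E2; auto.
  - exfalso. assert (x = y) as H by (apply H1; reflexivity). apply H2 in H. discriminate.
  - exfalso. assert (x = y) as H by (apply H2; reflexivity). apply H1 in H. discriminate.
Qed.

Lemma den_NegC G G' e e' : den I (NegC cty G) e = den I (NegC cty G') e'.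
Proof.
  apply app_ext; intro x. apply tv_inj. rewrite !den_neg. reflexivity.
Qed.

Lemma den_OrC G G' e e' : den I (OrC cty G) e = den I (OrC cty G') e'.
Proof.
  apply app_ext; intro x. apply app_ext; intro y. apply tv_inj. rewrite !den_or. reflexivity.
Qed.

Lemma den_AndC G G' e e' : den I (AndC cty G) e = den I (AndC cty G') e'.
Proof.
  apply app_ext; intro x. apply app_ext; intro y. apply tv_inj. rewrite !den_and. reflexivity.
Qed.

Lemma den_PiC G G' a e e' : den I (PiC cty G a) e = den I (PiC cty G' a) e'.
Proof.
  apply app_ext; intro f. apply tv_inj.
  pose proof (den_pi I G a e f) as H1. pose proof (den_pi I G' a e' f) as H2.
  destruct (tv I (ap I (den I (PiC cty G a) e) f)) eqn:E1;
  destruct (tv I (ap I (den I (PiC cty G' a) e') f)) eqn:E2; auto.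
  - exfalso. assert (H := proj1 H1 eq_refl). apply H2 in H. discriminate.
  - exfalso. assert (H := proj1 H2 eq_refl). apply H1 in H. discriminate.
Qed.

Lemma den_ren G a (t : tm G a) : forall G' (r : ren_t G G') (e : env (D I) G'),
  den I (ren r t) e = den I t (env_of G (fun b v => lookup (D I) (r b v) e)).
Proof.
  induction t; intros G' r e; simpl.
  - rewrite !den_var. rewrite lookup_env_of. reflexivity.
  - rewrite !den_con. reflexivity.
  - apply den_EqC.
  - apply den_NegC.
  - apply den_OrC.
  - apply den_AndC.
  - apply den_PiC.
  - rewrite !den_app. rewrite IHt1, IHt2. reflexivity.
  - apply app_ext; intro x. rewrite !den_lam. rewrite IHt. reflexivity.
Qed.

Lemma den_subst G a (t : tm G a) : forall G' (s : sub_t G G') (e : env (D I) G'),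
  den I (subst s t) e = den I t (env_of G (fun b v => den I (s b v) e)).
Proof.
  induction t; intros G' s e; simpl.
  - rewrite den_var. rewrite lookup_env_of. reflexivity.
  - rewrite !den_con. reflexivity.
  - apply den_EqC.
  - apply den_NegC.
  - apply den_OrC.
  - apply den_AndC.
  - apply den_PiC.
  - rewrite !den_app. rewrite IHt1, IHt2. reflexivity.
  - apply app_ext; intro x. rewrite !den_lam. rewrite IHt. simpl.
    rewrite den_var. simpl. f_equal. f_equal. apply env_of_ext. intros c v.
    rewrite den_ren. simpl. rewrite env_of_lookup. reflexivity.
Qed.

Lemma true_neg (phi : sentence) : true_in I (tNeg phi) <-> ~ true_in I phi.
Proof.
  unfold true_in, V, tNeg. rewrite den_app, den_neg.
  destruct (tv I (den I phi tt)); simpl; intuition congruence.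
Qed.

Lemma true_and (phi psi : sentence) : true_in I (tAnd phi psi) <-> true_in I phi /\ true_in I psi.
Proof.
  unfold true_in, V, tAnd. rewrite !den_app, den_and.
  destruct (tv I (den I phi tt)), (tv I (den I psi tt)); simpl; intuition congruence.
Qed.

Lemma true_or (phi psi : sentence) : true_in I (tOr phi psi) <-> true_in I phi \/ true_in I psi.
Proof.
  unfold true_in, V, tOr. rewrite !den_app, den_or.
  destruct (tv I (den I phi tt)), (tv I (den I psi tt)); simpl; intuition congruence.
Qed.

Lemma true_eq a (s t : ctm a) : true_in I (tEq s t) <-> V I s = V I t.
Proof.
  unfold true_in, V, tEq. rewrite !den_app. apply den_eq.
Qed.

Lemma true_top : true_in I Top.
Proof. unfold tTop. apply true_eq. reflexivity. Qed.

Lemma true_bigAnd l : true_in I (bigAnd l) <-> forall phi, In phi l -> true_in I phi.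
Proof.
  induction l; simpl.
  - split; [intros _ phi []| intros _; apply true_top].
  - rewrite true_and, IHl. split.
    + intros [H1 H2] phi [<-|H]; auto.
    + intros H; split; auto.
Qed.

Lemma V_bool_eq (phi psi : sentence) : (true_in I phi <-> true_in I psi) -> V I phi = V I psi.
Proof.
  unfold true_in; intro H. apply tv_inj.
  destruct (tv I (V I phi)), (tv I (V I psi)); intuition congruence.
Qed.

Lemma V_app a b (r : ctm (TArr a b)) t : V I (App r t) = ap I (V I r) (V I t).
Proof. unfold V. apply den_app. Qed.

End Sem.

Definition Sat (I : interp) (l : list sentence) := forall phi, In phi l -> true_in I phi.

Lemma sig_eq {A : Type} {P : A -> Prop} (x y : sig P) : proj1_sig x = proj1_sig y -> x = y.
Proof. destruct x, y; simpl; intros ->; f_equal; apply proof_irrelevance. Qed.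

Definition Kt (a : ty B) : ctm (TArr a TBool) :=
  Lam (tEq (NegC cty (a :: nil)) (NegC cty (a :: nil))).

Lemma true_K I a (t : ctm a) : true_in I (App (Kt a) t).
Proof.
  unfold true_in, V, Kt. rewrite den_app, den_lam. unfold tEq. rewrite !den_app.
  apply den_eq. reflexivity.
Qed.

Section TM.
Variable T : sentence -> Prop.
Hypothesis fsat : forall l, (forall phi, In phi l -> T phi) -> exists I, Sat I l.
Hypothesis compl : forall phi, T phi \/ T (tNeg phi).
Hypothesis henk : forall a b (r s : ctm (TArr a b)),
  (forall t, T (tEq (App r t) (App s t))) -> T (tEq r s).
Hypothesis inh : forall b, inhabited (ctm (TBase b)).

Lemma T_cons l psi : (forall phi, In phi l -> T phi) -> (forall I, Sat I l -> true_in I psi) -> T psi.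
Proof.
  intros Hl Hs. destruct (compl psi) as [H|H]; auto.
  destruct (fsat (tNeg psi :: l)) as [I HI].
  - intros phi [<-|Hin]; auto.
  - exfalso. apply (proj1 (true_neg I psi) (HI _ (or_introl eq_refl))).
    apply Hs. intros phi Hin; apply HI; right; auto.
Qed.

Lemma T_cons0 psi : (forall I, true_in I psi) -> T psi.
Proof. intros H; apply (T_cons nil); [intros _ []| intros I _; apply H]. Qed.

Lemma T_cons1 phi psi : T phi -> (forall I, true_in I phi -> true_in I psi) -> T psi.
Proof.
  intros H1 H; apply (T_cons (phi :: nil)).
  - intros x [<-|[]]; auto.
  - intros I HI; apply H; apply HI; left; auto.
Qed.

Lemma T_cons2 phi1 phi2 psi : T phi1 -> T phi2 ->
  (forall I, true_in I phi1 -> true_in I phi2 -> true_in I psi) -> T psi.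
Proof.
  intros H1 H2 H; apply (T_cons (phi1 :: phi2 :: nil)).
  - intros x [<-|[<-|[]]]; auto.
  - intros I HI; apply H; apply HI; simpl; auto.
Qed.

Lemma T_consis phi : T phi -> T (tNeg phi) -> False.
Proof.
  intros H1 H2. destruct (fsat (phi :: tNeg phi :: nil)) as [I HI].
  - intros x [<-|[<-|[]]]; auto.
  - apply (proj1 (true_neg I phi) (HI _ (or_intror (or_introl eq_refl)))).
    apply HI; left; auto.
Qed.

Lemma T_neg phi : T (tNeg phi) <-> ~ T phi.
Proof.
  split.
  - intros H1 H2; apply (T_consis phi); auto.
  - intros H; destruct (compl phi); tauto.
Qed.

Lemma T_and phi psi : T (tAnd phi psi) <-> T phi /\ T psi.
Proof.
  split.
  - intros H; split; apply (T_cons1 _ _ H); intros I HI; apply true_and in HI; tauto.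
  - intros [H1 H2]; apply (T_cons2 _ _ _ H1 H2); intros I ? ?; apply true_and; auto.
Qed.

Lemma T_or phi psi : T (tOr phi psi) <-> T phi \/ T psi.
Proof.
  split.
  - intros H. destruct (classic (T phi)) as [Hp|Hp]; auto.
    destruct (classic (T psi)) as [Hq|Hq]; auto. exfalso.
    apply T_neg in Hp. apply T_neg in Hq.
    destruct (fsat (tOr phi psi :: tNeg phi :: tNeg psi :: nil)) as [I HI].
    + intros x [<-|[<-|[<-|[]]]]; auto.
    + assert (H1 := HI _ (or_introl eq_refl)).
      assert (H2 := HI _ (or_intror (or_introl eq_refl))).
      assert (H3 := HI _ (or_intror (or_intror (or_introl eq_refl)))).
      apply true_or in H1. apply true_neg in H2. apply true_neg in H3. tauto.
  - intros [H|H]; apply (T_cons1 _ _ H); intros I HI; apply true_or; auto.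
Qed.

Lemma T_refl a (t : ctm a) : T (tEq t t).
Proof. apply T_cons0; intros I; apply true_eq; auto. Qed.

Lemma T_sym a (s t : ctm a) : T (tEq s t) -> T (tEq t s).
Proof. intros H; apply (T_cons1 _ _ H); intros I HI; apply true_eq; apply true_eq in HI; auto. Qed.

Lemma T_trans a (s t u : ctm a) : T (tEq s t) -> T (tEq t u) -> T (tEq s u).
Proof.
  intros H1 H2; apply (T_cons2 _ _ _ H1 H2); intros I ? ?; apply true_eq.
  apply true_eq in H. apply true_eq in H0. congruence.
Qed.

Lemma T_app_cong a b (r r' : ctm (TArr a b)) (u u' : ctm a) :
  T (tEq r r') -> T (tEq u u') -> T (tEq (App r u) (App r' u')).
Proof.
  intros H1 H2; apply (T_cons2 _ _ _ H1 H2); intros I ? ?; apply true_eq.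
  apply true_eq in H. apply true_eq in H0. rewrite !V_app. congruence.
Qed.

Lemma T_eq_bool (phi psi : sentence) : T (tEq phi psi) -> (T phi <-> T psi).
Proof.
  intros H; split; intros H'.
  - apply (T_cons2 _ _ _ H H'); intros I H1 H2; apply true_eq in H1.
    unfold true_in in *. rewrite <- H1. auto.
  - apply (T_cons2 _ _ _ H H'); intros I H1 H2; apply true_eq in H1.
    unfold true_in in *. rewrite H1. auto.
Qed.

(** the term model *)
Definition Dm (a : ty B) : Type := {P : ctm a -> Prop | exists t, P = fun u => T (tEq t u)}.

Definition cls {a} (t : ctm a) : Dm a :=
  exist _ (fun u => T (tEq t u)) (ex_intro _ t eq_refl).

Definition rep {a} (x : Dm a) : ctm a :=
  proj1_sig (constructive_indefinite_description _ (proj2_sig x)).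

Lemma rep_spec a (x : Dm a) : proj1_sig x = fun u => T (tEq (rep x) u).
Proof.
  unfold rep. destruct (constructive_indefinite_description _ (proj2_sig x)). simpl. auto.
Qed.

Lemma cls_rep a (x : Dm a) : cls (rep x) = x.
Proof. apply sig_eq. simpl. symmetry. apply rep_spec. Qed.
Arguments cls_rep {a}.

Lemma cls_eq a (s t : ctm a) : cls s = cls t <-> T (tEq s t).
Proof.
  split.
  - intros H. apply (f_equal (@proj1_sig _ _)) in H. simpl in H.
    apply (f_equal (fun P => P t)) in H. simpl in H. rewrite H. apply T_refl.
  - intros H. apply sig_eq. simpl. apply functional_extensionality. intros u.
    apply propositional_extensionality. split; intros H'.
    + apply (T_trans _ _ _ _ (T_sym _ _ _ H) H').
    + apply (T_trans _ _ _ _ H H').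
Qed.

Lemma rep_cls a (t : ctm a) : T (tEq (rep (cls t)) t).
Proof. apply cls_eq. apply cls_rep. Qed.

Definition tvm (x : Dm TBool) : bool :=
  if excluded_middle_informative (T (rep x)) then true else false.

Lemma tvm_cls phi : tvm (cls phi) = true <-> T phi.
Proof.
  unfold tvm. destruct (excluded_middle_informative _) as [H|H]; split; intros H'; auto.
  - apply (T_eq_bool _ _ (rep_cls _ phi)); auto.
  - discriminate.
  - exfalso; apply H. apply (T_eq_bool _ _ (rep_cls _ phi)); auto.
Qed.

Lemma tvm_cls_f phi : tvm (cls phi) = false <-> ~ T phi.
Proof.
  destruct (tvm (cls phi)) eqn:E.
  - apply tvm_cls in E. split; intros; [discriminate|tauto].
  - split; auto. intros _ H. apply tvm_cls in H. congruence.
Qed.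

Definition appm a b (f : Dm (TArr a b)) (x : Dm a) : Dm b := cls (App (rep f) (rep x)).
Arguments appm {a b}.

Lemma appm_cls a b (s : ctm (TArr a b)) u : appm (cls s) (cls u) = cls (App s u).
Proof. apply cls_eq. apply T_app_cong; apply rep_cls. Qed.

Definition senv G (e : env Dm G) : sub_t G nil := fun b v => rep (lookup Dm v e).
Arguments senv {G}.

Definition denm G a (t : tm G a) (e : env Dm G) : Dm a := cls (subst (senv e) t).
Arguments denm {G a}.

Lemma Dm_base_ne b : inhabited (Dm (TBase b)).
Proof. destruct (inh b) as [t]. exact (inhabits (cls t)). Qed.

Lemma tvm_inj x y : tvm x = tvm y -> x = y.
Proof.
  rewrite <- (cls_rep x), <- (cls_rep y). intros H. apply cls_eq.
  destruct (tvm (cls (rep x))) eqn:E1.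
  - apply tvm_cls in E1. symmetry in H. apply tvm_cls in H.
    apply (T_cons2 _ _ _ E1 H); intros I H1 H2; apply true_eq; apply V_bool_eq; tauto.
  - apply tvm_cls_f in E1. symmetry in H. apply tvm_cls_f in H.
    apply T_neg in E1. apply T_neg in H.
    apply (T_cons2 _ _ _ E1 H); intros I H1 H2; apply true_eq; apply V_bool_eq;
    apply true_neg in H1; apply true_neg in H2; tauto.
Qed.

Lemma tvm_surj bo : exists x, tvm x = bo.
Proof.
  destruct bo.
  - exists (cls Top). apply tvm_cls. apply T_cons0. apply true_top.
  - exists (cls (tNeg Top)). apply tvm_cls_f. intros H. apply T_neg in H.
    apply H. apply T_cons0. apply true_top.
Qed.

Lemma appm_ext a b (f g : Dm (TArr a b)) : (forall x, appm f x = appm g x) -> f = g.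
Proof.
  intros H. rewrite <- (cls_rep f), <- (cls_rep g). apply cls_eq. apply henk. intros t.
  specialize (H (cls t)). unfold appm in H. apply cls_eq in H.
  apply (T_trans _ _ _ _ (T_app_cong _ _ _ _ _ _ (T_refl _ _) (T_sym _ _ _ (rep_cls _ t)))).
  apply (T_trans _ _ _ _ H). apply T_app_cong; [apply T_refl| apply rep_cls].
Qed.

Definition cvalm (c : C) : Dm (cty c) := cls (Con cty nil c).

Lemma denm_var G a (v : var G a) e : denm (Var cty v) e = lookup Dm v e.
Proof. unfold denm; simpl. apply cls_rep. Qed.

Lemma denm_con G c e : denm (Con cty G c) e = cvalm c.
Proof. reflexivity. Qed.

Lemma denm_app G a b (s : tm G (TArr a b)) (t : tm G a) e :
  denm (App s t) e = appm (denm s e) (denm t e).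
Proof. unfold denm. simpl. symmetry. apply appm_cls. Qed.

Lemma denm_lam G a b (t : tm (a :: G) b) e x : appm (denm (Lam t) e) x = denm t (x, e).
Proof.
  rewrite <- (cls_rep x) at 1. unfold denm. rewrite appm_cls. apply cls_eq.
  apply T_cons0. intros I. apply true_eq. rewrite V_app. unfold V. cbn [subst]. rewrite den_lam.
  simpl. rewrite !den_subst. f_equal. simpl. f_equal.
  - rewrite den_var. reflexivity.
  - apply env_of_ext. intros c v. rewrite den_ren. reflexivity.
Qed.

Lemma denm_eq G a e (x y : Dm a) :
  tvm (appm (appm (denm (EqC cty G a) e) x) y) = true <-> x = y.
Proof.
  rewrite <- (cls_rep x), <- (cls_rep y). unfold denm; simpl.
  rewrite !appm_cls. rewrite tvm_cls. symmetry. apply cls_eq.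
Qed.

Lemma denm_neg G e x : tvm (appm (denm (NegC cty G) e) x) = negb (tvm x).
Proof.
  rewrite <- (cls_rep x). unfold denm; simpl. rewrite appm_cls.
  destruct (classic (T (rep x))) as [H|H].
  - assert (E : tvm (cls (rep x)) = true) by (apply tvm_cls; auto). rewrite E.
    apply tvm_cls_f. intros H2. apply (proj1 (T_neg _)) in H2. tauto.
  - assert (E : tvm (cls (rep x)) = false) by (apply tvm_cls_f; auto). rewrite E.
    apply tvm_cls. apply T_neg. auto.
Qed.

Lemma tvm_b phi : tvm (cls phi) = (if excluded_middle_informative (T phi) then true else false).
Proof.
  destruct (excluded_middle_informative (T phi)); [apply tvm_cls|apply tvm_cls_f]; auto.
Qed.

Lemma tvm_t phi : T phi -> tvm (cls phi) = true.
Proof. apply tvm_cls. Qed.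
Lemma tvm_f phi : ~ T phi -> tvm (cls phi) = false.
Proof. apply tvm_cls_f. Qed.

Lemma denm_or G e x y : tvm (appm (appm (denm (OrC cty G) e) x) y) = orb (tvm x) (tvm y).
Proof.
  rewrite <- (cls_rep x), <- (cls_rep y). unfold denm; simpl. rewrite !appm_cls.
  change (tvm (cls (tOr (rep x) (rep y))) = orb (tvm (cls (rep x))) (tvm (cls (rep y)))).
  destruct (classic (T (rep x))) as [H1|H1];
  [rewrite (tvm_t _ H1) | rewrite (tvm_f _ H1)];
  (destruct (classic (T (rep y))) as [H2|H2];
  [rewrite (tvm_t _ H2) | rewrite (tvm_f _ H2)]); simpl;
  first [apply tvm_t; apply T_or; tauto | apply tvm_f; rewrite T_or; tauto].
Qed.

Lemma denm_and G e x y : tvm (appm (appm (denm (AndC cty G) e) x) y) = andb (tvm x) (tvm y).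
Proof.
  rewrite <- (cls_rep x), <- (cls_rep y). unfold denm; simpl. rewrite !appm_cls.
  change (tvm (cls (tAnd (rep x) (rep y))) = andb (tvm (cls (rep x))) (tvm (cls (rep y)))).
  destruct (classic (T (rep x))) as [H1|H1];
  [rewrite (tvm_t _ H1) | rewrite (tvm_f _ H1)];
  (destruct (classic (T (rep y))) as [H2|H2];
  [rewrite (tvm_t _ H2) | rewrite (tvm_f _ H2)]); simpl;
  first [apply tvm_t; apply T_and; tauto | apply tvm_f; rewrite T_and; tauto].
Qed.

Lemma denm_pi G a e (f : Dm (TArr a TBool)) :
  tvm (appm (denm (PiC cty G a) e) f) = true <-> forall x, tvm (appm f x) = true.
Proof.
  rewrite <- (cls_rep f) at 1. unfold denm; simpl. rewrite appm_cls, tvm_cls. split.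
  - intros H x. unfold appm. apply tvm_cls. apply (T_cons1 _ _ H). intros I HI.
    unfold true_in in *. rewrite V_app in *. unfold V at 1 in HI. exact (proj1 (den_pi I nil a tt _) HI _).
  - intros H.
    assert (Ht : forall t, T (App (rep f) t)).
    { intros t. specialize (H (cls t)). unfold appm in H. apply tvm_cls in H.
      apply (T_eq_bool _ _ (T_app_cong _ _ _ _ _ _ (T_refl _ _) (rep_cls _ t))). auto. }
    assert (HK : T (tEq (rep f) (Kt a))).
    { apply henk. intros t. apply (T_cons1 _ _ (Ht t)). intros I HI. apply true_eq.
      apply V_bool_eq. split; auto. intros _; apply true_K. }
    apply (T_cons1 _ _ HK). intros I HI. apply true_eq in HI.
    unfold true_in. rewrite V_app. unfold V at 1. apply den_pi. intros y.
    rewrite HI. unfold V, Kt. rewrite den_lam. unfold tEq. rewrite !den_app. apply den_eq. auto.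
Qed.

Definition TM : interp := {|
  D := Dm; D_base_ne := Dm_base_ne; tv := tvm; tv_inj := tvm_inj; tv_surj := tvm_surj;
  Defs.app := @appm; app_ext := appm_ext; cval := cvalm; den := @denm;
  den_var := denm_var; den_con := denm_con; den_app := denm_app; den_lam := denm_lam;
  den_eq := denm_eq; den_neg := denm_neg; den_or := denm_or; den_and := denm_and;
  den_pi := denm_pi |}.

Lemma V_TM a (t : ctm a) : V TM t = cls t.
Proof.
  unfold V; simpl. unfold denm. apply cls_eq. apply T_cons0. intros I. apply true_eq.
  unfold V. rewrite den_subst. reflexivity.
Qed.

Lemma TM_true phi : true_in TM phi <-> T phi.
Proof. unfold true_in. rewrite V_TM. apply tvm_cls. Qed.

Lemma TM_sep : separating TM.
Proof.
  intros a b r s H. apply NNPP. intros H'. apply H. rewrite !V_TM. apply cls_eq.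
  apply henk. intros t. apply cls_eq. rewrite <- !V_TM. apply NNPP. intros H2. apply H'.
  exists t. auto.
Qed.

End TM.

(** * Countability *)
Section Enc.
Variables (fB : B -> nat) (fC : C -> nat).
Hypothesis fB_inj : forall x y, fB x = fB y -> x = y.
Hypothesis fC_inj : forall x y, fC x = fC y -> x = y.

Definition pr (x y : nat) : nat := Cantor.to_nat (x, y).
Lemma pr_inj x y x' y' : pr x y = pr x' y' -> x = x' /\ y = y'.
Proof.
  unfold pr; intros H. apply (f_equal Cantor.of_nat) in H.
  rewrite !Cantor.cancel_of_to in H. injection H; auto.
Qed.

Fixpoint enct (a : ty B) : nat :=
  match a with
  | TBase b => pr 0 (fB b)
  | TBool => pr 1 0
  | TArr a b => pr 2 (pr (enct a) (enct b))
  end.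

Lemma enct_inj a a' : enct a = enct a' -> a = a'.
Proof.
  revert a'; induction a; intros a' H; destruct a'; simpl in H;
  apply pr_inj in H; destruct H as [H1 H2]; try discriminate.
  - f_equal; auto.
  - auto.
  - apply pr_inj in H2; destruct H2. f_equal; auto.
Qed.

Fixpoint encv {G : list (ty B)} {a : ty B} (v : var G a) : nat :=
  match v with
  | Vz _ _ => pr 0 0
  | Vs _ v' => pr 1 (encv v')
  end.

Lemma encv_inj_gen G a (v : var G a) : forall G' a' (v' : var G' a'), G = G' ->
  encv v = encv v' ->
  existT (fun p : list (ty B) * ty B => var (fst p) (snd p)) (G, a) v = existT _ (G', a') v'.
Proof.
  induction v; intros G' a' v'; destruct v'; simpl; intros HG H; apply pr_inj in H;
  destruct H as [H1 H2]; try discriminate.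
  - injection HG; intros; subst. reflexivity.
  - injection HG; intros; subst. apply (IHv _ _ v' eq_refl) in H2.
    assert (E := f_equal (@projT1 _ _) H2); simpl in E; injection E; intros; subst.
    apply inj_pair2 in H2. subst. reflexivity.
Qed.

Lemma encv_inj G a (v : var G a) a' (v' : var G a') :
  encv v = encv v' -> existT (fun c => var G c) a v = existT _ a' v'.
Proof.
  intros H. apply (encv_inj_gen G a v G a' v' eq_refl) in H.
  assert (E := f_equal (@projT1 _ _) H); simpl in E; injection E; intros; subst.
  apply inj_pair2 in H. subst. reflexivity.
Qed.

Fixpoint enc {G a} (t : tm G a) : nat :=
  match t with
  | Var _ v => pr 0 (encv v)
  | Con _ _ c => pr 1 (fC c)
  | EqC _ _ a => pr 2 (enct a)
  | NegC _ _ => pr 3 0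
  | OrC _ _ => pr 4 0
  | AndC _ _ => pr 5 0
  | PiC _ _ a => pr 6 (enct a)
  | @App _ _ _ _ a _ s u => pr 7 (pr (enct a) (pr (enc s) (enc u)))
  | @Lam _ _ _ _ a _ t => pr 8 (pr (enct a) (enc t))
  end.

Lemma enc_inj G a (t : tm G a) : forall a' (t' : tm G a'),
  enc t = enc t' -> existT (fun c => tm G c) a t = existT _ a' t'.
Proof.
  induction t; intros a' t'; destruct t'; simpl; intro H; apply pr_inj in H;
  destruct H as [H1 H2]; try discriminate.
  - apply encv_inj in H2. assert (E := f_equal (@projT1 _ _) H2); simpl in E; subst.
    apply inj_pair2 in H2. subst. reflexivity.
  - apply fC_inj in H2. subst. reflexivity.
  - apply enct_inj in H2. subst. reflexivity.
  - reflexivity.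
  - reflexivity.
  - reflexivity.
  - apply enct_inj in H2. subst. reflexivity.
  - apply pr_inj in H2. destruct H2 as [H2 H3]. apply pr_inj in H3. destruct H3 as [H3 H4].
    apply enct_inj in H2. subst. apply IHt1 in H3. apply IHt2 in H4.
    assert (E := f_equal (@projT1 _ _) H3); simpl in E; injection E; intros; subst.
    apply inj_pair2 in H3. apply inj_pair2 in H4. subst. reflexivity.
  - apply pr_inj in H2. destruct H2 as [H2 H3]. apply enct_inj in H2. subst.
    apply IHt in H3. assert (E := f_equal (@projT1 _ _) H3); simpl in E; subst.
    apply inj_pair2 in H3. subst. reflexivity.
Qed.

Lemma enc_sent_inj (phi psi : sentence) : enc phi = enc psi -> phi = psi.
Proof. intros H. apply enc_inj in H. apply inj_pair2 in H. auto. Qed.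

Lemma tEq_inj a b (r s : ctm (TArr a b)) a' b' (r' s' : ctm (TArr a' b')) :
  tEq r s = tEq r' s' ->
  existT (fun p : ty B * ty B => ctm (TArr (fst p) (snd p)) * ctm (TArr (fst p) (snd p)))%type
    (a, b) (r, s) = existT _ (a', b') (r', s').
Proof.
  intros H. apply (f_equal enc) in H. simpl in H.
  apply pr_inj in H; destruct H as [_ H]. apply pr_inj in H; destruct H as [_ H].
  apply pr_inj in H; destruct H as [H Hs]. apply pr_inj in H; destruct H as [_ H].
  apply pr_inj in H; destruct H as [_ H]. apply pr_inj in H; destruct H as [_ Hr].
  apply enc_inj in Hr. apply enc_inj in Hs.
  assert (E := f_equal (@projT1 _ _) Hr); simpl in E; injection E; intros; subst.
  apply inj_pair2 in Hr. apply inj_pair2 in Hs. subst. reflexivity.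
Qed.

End Enc.

(** * Probabilities *)
Section Prob.
Variable mu : sentence -> R.
Hypothesis hp : prob_on_sentences mu.
Local Open Scope R_scope.

Lemma mu_ge0 phi : 0 <= mu phi.
Proof. apply hp. Qed.

Lemma mu_valid phi : (forall I, true_in I phi) -> mu phi = 1.
Proof. intros H; apply hp; exact H. Qed.

Lemma mu_add phi psi : (forall I, true_in I phi -> true_in I psi -> False) ->
  mu (tOr phi psi) = mu phi + mu psi.
Proof.
  intros H; apply hp. intros I. apply true_neg. intros H'. apply true_and in H'.
  destruct H'; eapply H; eauto.
Qed.

Lemma mu_neg phi : mu (tNeg phi) = 1 - mu phi.
Proof.
  assert (H1 : mu (tOr phi (tNeg phi)) = 1).
  { apply mu_valid. intros I. apply true_or. destruct (classic (true_in I phi)); auto.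
    right; apply true_neg; auto. }
  rewrite mu_add in H1. lra. intros I H2 H3. apply true_neg in H3. auto.
Qed.

Lemma mu_equiv phi psi : (forall I, true_in I phi <-> true_in I psi) -> mu phi = mu psi.
Proof.
  intros H.
  assert (H1 : mu (tOr psi (tNeg phi)) = 1).
  { apply mu_valid. intros I. apply true_or. destruct (classic (true_in I phi)) as [h|h].
    left; apply H; auto. right; apply true_neg; auto. }
  rewrite mu_add, mu_neg in H1. lra.
  intros I H2 H3. apply true_neg in H3. apply H3, H, H2.
Qed.

Lemma mu_unsat phi : (forall I, ~ true_in I phi) -> mu phi = 0.
Proof.
  intros H. assert (H1 : mu (tNeg phi) = 1).
  { apply mu_valid. intros I. apply true_neg. apply H. }
  rewrite mu_neg in H1. lra.
Qed.

Lemma mu_split L phi : mu L = mu (tAnd L phi) + mu (tAnd L (tNeg phi)).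
Proof.
  rewrite <- mu_add.
  - apply mu_equiv. intros I. rewrite true_or, !true_and, true_neg.
    destruct (classic (true_in I phi)); tauto.
  - intros I H1 H2. apply true_and in H1. apply true_and in H2. destruct H1, H2.
    apply true_neg in H2. auto.
Qed.

Lemma mu_mono phi psi : (forall I, true_in I phi -> true_in I psi) -> mu phi <= mu psi.
Proof.
  intros H. rewrite (mu_split psi phi).
  rewrite (mu_equiv (tAnd psi phi) phi).
  - pose proof (mu_ge0 (tAnd psi (tNeg phi))). lra.
  - intros I. rewrite true_and. split; [tauto|]. intros h; split; auto.
Qed.

Lemma mu_top : mu Top = 1.
Proof. apply mu_valid. apply true_top. Qed.

Lemma mu_le1 phi : mu phi <= 1.
Proof. rewrite <- mu_top. apply mu_mono. intros; apply true_top. Qed.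

(** coding of the interval [0,1) by sequences of decisions *)
Variable e : nat -> sentence.
Hypothesis e_surj : forall phi, exists n, e n = phi.

Definition step (x : R) (k : nat) (p : R * sentence) : R * sentence :=
  if Rlt_dec x (fst p + mu (tAnd (snd p) (e k))) then (fst p, tAnd (snd p) (e k))
  else (fst p + mu (tAnd (snd p) (e k)), tAnd (snd p) (tNeg (e k))).

Fixpoint run (x : R) (m n : nat) (p : R * sentence) : R * sentence :=
  match m with O => p | S m => run x m (S n) (step x n p) end.

Lemma run_S x m : forall n p, run x (S m) n p = step x (n + m) (run x m n p).
Proof.
  induction m; intros n p.
  - simpl. rewrite Nat.add_0_r. reflexivity.
  - change (run x (S (S m)) n p) with (run x (S m) (S n) (step x n p)).
    rewrite IHm. replace (S n + m)%nat with (n + S m)%nat by lia. reflexivity.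
Qed.

Definition Inv (x : R) (p : R * sentence) := fst p <= x < fst p + mu (snd p).

Lemma step_inv x k p : Inv x p -> Inv x (step x k p).
Proof.
  unfold Inv, step; intros [H1 H2]. rewrite (mu_split (snd p) (e k)) in H2.
  destruct (Rlt_dec _ _); simpl; lra.
Qed.

Definition st x m := run x m 0 (0, Top).
Definition dec (k : nat) (x : R) : Prop := x < fst (st x k) + mu (tAnd (snd (st x k)) (e k)).

Lemma st_S x m : st x (S m) = step x m (st x m).
Proof. unfold st. rewrite run_S. reflexivity. Qed.

Lemma st_inv x m : Meas.U01 x -> Inv x (st x m).
Proof.
  intros [H1 H2]. induction m.
  - unfold Inv, st; simpl. rewrite mu_top. lra.
  - rewrite st_S. apply step_inv. auto.
Qed.

Lemma st_lits x m I : true_in I (snd (st x m)) -> forall k, (k < m)%nat ->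
  (dec k x -> true_in I (e k)) /\ (~ dec k x -> true_in I (tNeg (e k))).
Proof.
  induction m; intros H k Hk; [lia|].
  rewrite st_S in H. unfold step in H. unfold dec at 1 2.
  destruct (Rlt_dec x (fst (st x m) + mu (tAnd (snd (st x m)) (e m)))) as [h|h];
  simpl in H; apply true_and in H; destruct H as [H1 H2].
  - destruct (Nat.eq_dec k m) as [->|hk]; [split; tauto|]. apply IHm; auto. lia.
  - destruct (Nat.eq_dec k m) as [->|hk]; [split; tauto|]. apply IHm; auto. lia.
Qed.

Lemma st_sat x m : Meas.U01 x -> exists I, true_in I (snd (st x m)).
Proof.
  intros Hx. apply NNPP. intros H.
  assert (H0 : mu (snd (st x m)) = 0).
  { apply mu_unsat. intros I HI. apply H. exists I. auto. }
  destruct (st_inv x m Hx) as [h1 h2]. lra.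
Qed.

Definition Ux (x : R) (phi : sentence) : Prop := exists k, e k = phi /\ dec k x.

Lemma Ux_bound x l : (forall phi, In phi l -> Ux x phi) ->
  exists m, forall phi, In phi l -> exists k, (k < m)%nat /\ e k = phi /\ dec k x.
Proof.
  induction l; intros H.
  - exists O. intros phi [].
  - destruct IHl as [m Hm]. intros; apply H; right; auto.
    destruct (H a (or_introl eq_refl)) as [k [hk1 hk2]].
    exists (S (Nat.max m k)). intros phi [<-|Hin].
    + exists k. split; [lia|auto].
    + destruct (Hm phi Hin) as [j [hj1 hj2]]. exists j. split; [lia|auto].
Qed.

Lemma Ux_fsat x : Meas.U01 x -> forall l, (forall phi, In phi l -> Ux x phi) -> exists I, Sat I l.
Proof.
  intros Hx l Hl. destruct (Ux_bound x l Hl) as [m Hm].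
  destruct (st_sat x m Hx) as [I HI]. exists I. intros phi Hin.
  destruct (Hm phi Hin) as [k [hk [<- hd]]].
  apply (st_lits x m I HI k hk). auto.
Qed.

Lemma Ux_compl x : Meas.U01 x -> forall phi, Ux x phi \/ Ux x (tNeg phi).
Proof.
  intros Hx phi. destruct (e_surj phi) as [k hk]. destruct (e_surj (tNeg phi)) as [j hj].
  destruct (classic (dec k x)) as [h1|h1]; [left; exists k; auto|].
  destruct (classic (dec j x)) as [h2|h2]; [right; exists j; auto|].
  exfalso. destruct (st_sat x (S (Nat.max k j)) Hx) as [I HI].
  assert (A := proj2 (st_lits x _ I HI k ltac:(lia)) h1).
  assert (A2 := proj2 (st_lits x _ I HI j ltac:(lia)) h2).
  rewrite hk in A. rewrite hj in A2. apply true_neg in A2. auto.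
Qed.

Lemma Ux_iff x k phi : Meas.U01 x -> e k = phi -> (Ux x phi <-> dec k x).
Proof.
  intros Hx hk. split; [|intros; exists k; auto].
  intros [j [hj hd]]. apply NNPP. intros hn.
  destruct (st_sat x (S (Nat.max k j)) Hx) as [I HI].
  assert (A := proj1 (st_lits x _ I HI j ltac:(lia)) hd).
  assert (A2 := proj2 (st_lits x _ I HI k ltac:(lia)) hn).
  rewrite hk in A2. rewrite hj in A. apply true_neg in A2. auto.
Qed.

Lemma run_meas m : forall n p psi, 0 <= fst p -> fst p + mu (snd p) <= 1 ->
  Meas.Meas (fun x => (fst p <= x < fst p + mu (snd p)) /\
                      x < fst (run x m n p) + mu (tAnd (snd (run x m n p)) psi)) /\
  Meas.lam (fun x => (fst p <= x < fst p + mu (snd p)) /\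
                      x < fst (run x m n p) + mu (tAnd (snd (run x m n p)) psi))
  = mu (tAnd (snd p) psi).
Proof.
  induction m; intros n p psi H0 H1.
  - simpl.
    assert (Hle : mu (tAnd (snd p) psi) <= mu (snd p)).
    { apply mu_mono. intros I HI; apply true_and in HI; tauto. }
    assert (E : forall x, (fst p <= x < fst p + mu (snd p)) /\ x < fst p + mu (tAnd (snd p) psi)
                <-> fst p <= x < fst p + mu (tAnd (snd p) psi)).
    { intros x; split; intros; lra. }
    split.
    + eapply Meas.Meas_ext. intros x; symmetry; apply E. apply Meas.Meas_itv.
    + rewrite (Meas.lam_ext _ _ E). rewrite Meas.lam_itv; try lra.
      pose proof (mu_ge0 (tAnd (snd p) psi)). lra.
  - destruct p as [lo L]. simpl in H0, H1 |- *.
    set (phi := e n).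
    set (p1 := (lo, tAnd L phi)). set (p2 := (lo + mu (tAnd L phi), tAnd L (tNeg phi))).
    assert (Hs := mu_split L phi).
    pose proof (mu_ge0 (tAnd L phi)). pose proof (mu_ge0 (tAnd L (tNeg phi))).
    destruct (IHm (S n) p1 psi) as [M1 L1]; simpl; try lra.
    destruct (IHm (S n) p2 psi) as [M2 L2]; simpl; try lra.
    simpl in M1, L1, M2, L2.
    assert (E : forall x,
      ((lo <= x < lo + mu L) /\ x < fst (run x m (S n) (step x n (lo, L))) +
          mu (tAnd (snd (run x m (S n) (step x n (lo, L)))) psi)) <->
      (((lo <= x < lo + mu (tAnd L phi)) /\ x < fst (run x m (S n) p1) + mu (tAnd (snd (run x m (S n) p1)) psi))
       \/ ((lo + mu (tAnd L phi) <= x < lo + mu (tAnd L phi) + mu (tAnd L (tNeg phi))) /\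
           x < fst (run x m (S n) p2) + mu (tAnd (snd (run x m (S n) p2)) psi)))).
    { intros x. unfold step. simpl. fold phi.
      destruct (Rlt_dec x (lo + mu (tAnd L phi))) as [h|h]; fold p1; fold p2; split.
      - intros [h1 h2]; left; split; [lra|auto].
      - intros [[h1 h2]|[h1 h2]]; [split; [lra|auto]| lra].
      - intros [h1 h2]; right; split; [lra|auto].
      - intros [[h1 h2]|[h1 h2]]; [lra|split; [lra|auto]]. }
    split.
    + eapply Meas.Meas_ext. intros x; symmetry; apply E. apply Meas.Meas_or; auto.
    + rewrite (Meas.lam_ext _ _ E). rewrite Meas.lam_add; auto.
      * rewrite L1, L2. rewrite (mu_split (tAnd L psi) phi).
        f_equal; apply mu_equiv; intros I; rewrite !true_and; tauto.
      * intros x [[h1 h2] _] [[h3 h4] _]. lra.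
Qed.

Definition Uset (phi : sentence) : R -> Prop := fun x => Meas.U01 x /\ Ux x phi.

Lemma Uset_meas phi : Meas.Meas (Uset phi) /\ Meas.lam (Uset phi) = mu phi.
Proof.
  destruct (e_surj phi) as [k hk].
  destruct (run_meas k O (0, Top) (e k)) as [M L]; simpl; rewrite ?mu_top; try lra.
  simpl in M, L.
  assert (E : forall x, (0 <= x < 0 + mu Top) /\
     x < fst (run x k 0 (0, Top)) + mu (tAnd (snd (run x k 0 (0, Top))) (e k)) <-> Uset phi x).
  { intros x. rewrite mu_top. unfold Uset. split.
    - intros [h1 h2]. assert (Hx : Meas.U01 x) by (unfold Meas.U01; lra).
      split; auto. apply (Ux_iff x k phi Hx hk). exact h2.
    - intros [Hx h]. apply (Ux_iff x k phi Hx hk) in h. unfold Meas.U01 in Hx.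
      split; [lra| exact h]. }
  split.
  - eapply Meas.Meas_ext; [exact E| exact M].
  - rewrite <- (Meas.lam_ext _ _ E). rewrite L. subst phi. apply mu_equiv.
    intros I; rewrite true_and; split; [tauto|]. intros; split; auto; apply true_top.
Qed.


Lemma Meas_cand (A : R -> Prop) (Pp : Prop) : Meas.Meas A -> Meas.Meas (fun x => A x /\ Pp).
Proof.
  intros hA. destruct (classic Pp) as [h|h].
  - eapply Meas.Meas_ext; [|exact hA]. intros x; tauto.
  - eapply Meas.Meas_ext; [|exact (Meas.Meas_itv 0 0)]. intros x; split; [lra|tauto].
Qed.

Hypothesis hg : gaifman mu.
Variables (fB : B -> nat) (fC : C -> nat).
Hypothesis fB_inj : forall x y, fB x = fB y -> x = y.
Hypothesis fC_inj : forall x y, fC x = fC y -> x = y.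

Definition conjl a b (r s : ctm (TArr a b)) (l : list (ctm a)) : sentence :=
  bigAnd (map (fun t => tEq (App r t) (App s t)) l).

Lemma gaif a b (r s : ctm (TArr a b)) eps : 0 < eps ->
  exists l, mu (conjl a b r s l) < mu (tEq r s) + eps.
Proof. intros he. destruct (hg a b r s) as [_ H]. exact (H eps he). Qed.

Lemma mu_conjl_neg a b (r s : ctm (TArr a b)) l :
  mu (tAnd (conjl a b r s l) (tNeg (tEq r s))) = mu (conjl a b r s l) - mu (tEq r s).
Proof.
  rewrite (mu_split (conjl a b r s l) (tEq r s)).
  rewrite (mu_equiv (tAnd (conjl a b r s l) (tEq r s)) (tEq r s)). ring.
  intros I. rewrite true_and. split; [tauto|]. intros H; split; auto.
  apply true_bigAnd. intros phi Hin. apply in_map_iff in Hin. destruct Hin as [t [<- _]].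
  apply true_eq. apply true_eq in H. rewrite !V_app, H. reflexivity.
Qed.

Definition bad_rs a b (r s : ctm (TArr a b)) (x : R) : Prop :=
  Meas.U01 x /\ ~ Ux x (tEq r s) /\ forall t, Ux x (tEq (App r t) (App s t)).

Lemma bad_rs_sub a b (r s : ctm (TArr a b)) x l :
  bad_rs a b r s x -> Uset (tAnd (conjl a b r s l) (tNeg (tEq r s))) x.
Proof.
  intros [Hx [h1 h2]]. split; auto.
  apply (proj2 (T_and _ (Ux_fsat x Hx) (Ux_compl x Hx) _ _)); split.
  - apply (T_cons _ (Ux_fsat x Hx) (Ux_compl x Hx) (map (fun t => tEq (App r t) (App s t)) l)).
    + intros phi Hin; apply in_map_iff in Hin; destruct Hin as [t [<- _]]; apply h2.
    + intros I HI; apply true_bigAnd; exact HI.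
  - apply (proj2 (T_neg _ (Ux_fsat x Hx) (Ux_compl x Hx) _)); auto.
Qed.

Lemma bad_rs_meas a b (r s : ctm (TArr a b)) :
  Meas.Meas (bad_rs a b r s) /\ Meas.lam (bad_rs a b r s) = 0.
Proof.
  set (W := fun n x => Meas.U01 x /\ (forall t, e n = tEq (App r t) (App s t) -> Ux x (e n))).
  assert (HW : forall n, Meas.Meas (W n)).
  { intros n. destruct (classic (exists t, e n = tEq (App r t) (App s t))) as [[t0 ht]|hn].
    - eapply Meas.Meas_ext; [|exact (proj1 (Uset_meas (e n)))]. intros x. unfold W, Uset.
      split; [intros [Hx H]; split; auto | intros [Hx H]; split; eauto].
    - eapply Meas.Meas_ext; [|exact Meas.Meas_U01]. intros x. unfold W.
      split; [intros Hx; split; [exact Hx|] | intros [Hx _]; exact Hx].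
      intros t ht; exfalso; apply hn; eauto. }
  assert (E : forall x, (Meas.U01 x /\ ~ Uset (tEq r s) x /\ forall n, W n x) <-> bad_rs a b r s x).
  { intros x; split.
    - intros [Hx [h1 h2]]. split; [auto|split].
      + intros h; apply h1; split; auto.
      + intros t. destruct (e_surj (tEq (App r t) (App s t))) as [n hn].
        destruct (h2 n) as [_ H]. rewrite <- hn. exact (H t hn).
    - intros [Hx [h1 h2]]. split; [auto|split].
      + intros [_ h]; auto.
      + intros n. split; auto. intros t ht. rewrite ht. apply h2. }
  assert (M : Meas.Meas (bad_rs a b r s)).
  { eapply Meas.Meas_ext; [exact E|]. apply Meas.Meas_and; [apply Meas.Meas_U01|].
    apply Meas.Meas_and; [apply Meas.Meas_not; apply Uset_meas|]. apply Meas.Meas_all; auto. }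
  split; auto.
  apply Rle_antisym; [|apply Meas.lam_ge0].
  apply Rnot_lt_le. intros hpos.
  destruct (gaif a b r s _ hpos) as [l hl].
  assert (H1 : Meas.lam (bad_rs a b r s) <= Meas.lam (Uset (tAnd (conjl a b r s l) (tNeg (tEq r s))))).
  { apply Meas.lam_mono; auto. apply Uset_meas. intros x; apply bad_rs_sub. }
  rewrite (proj2 (Uset_meas _)), mu_conjl_neg in H1. lra.
Qed.

Definition Bn (n : nat) (x : R) : Prop :=
  exists a b (r s : ctm (TArr a b)), e n = tEq r s /\ bad_rs a b r s x.

Lemma Bn_meas n : Meas.Meas (Bn n) /\ Meas.lam (Bn n) = 0.
Proof.
  destruct (classic (exists q : {p : ty B * ty B &
       (ctm (TArr (fst p) (snd p)) * ctm (TArr (fst p) (snd p)))%type},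
       e n = tEq (fst (projT2 q)) (snd (projT2 q)))) as [[q hq]|hn].
  - destruct q as [[a b] [r s]]. simpl in hq.
    assert (E : forall x, bad_rs a b r s x <-> Bn n x).
    { intros x; split.
      - intros h. exists a, b, r, s. auto.
      - intros [a' [b' [r' [s' [he hb]]]]]. rewrite hq in he.
        apply (tEq_inj fB fC fB_inj fC_inj) in he.
        assert (E := f_equal (@projT1 _ _) he); simpl in E; injection E; intros; subst.
        apply inj_pair2 in he. injection he; intros; subst. auto. }
    destruct (bad_rs_meas a b r s) as [M L]. split.
    + eapply Meas.Meas_ext; [exact E| exact M].
    + rewrite <- (Meas.lam_ext _ _ E). auto.
  - assert (E : forall x, (0 <= x < 0) <-> Bn n x).
    { intros x; split; [lra|]. intros [a [b [r [s [he _]]]]]. exfalso. apply hn.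
      exists (existT _ (a, b) (r, s)). simpl. auto. }
    split.
    + eapply Meas.Meas_ext; [exact E| apply Meas.Meas_itv].
    + rewrite <- (Meas.lam_ext _ _ E). rewrite Meas.lam_itv; lra.
Qed.

Definition bad (x : R) : Prop := exists n, Bn n x.

Lemma bad_meas : Meas.Meas bad /\ Meas.lam bad = 0.
Proof.
  split.
  - apply Meas.Meas_ex. intros n; apply Bn_meas.
  - apply Meas.lam_null_union; intros n; apply Bn_meas.
Qed.

Definition good (x : R) : Prop := Meas.U01 x /\ ~ bad x.

Lemma good_henk x : good x -> forall a b (r s : ctm (TArr a b)),
  (forall t, Ux x (tEq (App r t) (App s t))) -> Ux x (tEq r s).
Proof.
  intros [Hx hb] a b r s H. apply NNPP; intros hn. apply hb.
  destruct (e_surj (tEq r s)) as [n hn']. exists n. exists a, b, r, s. split; auto.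
  split; auto.
Qed.

Lemma inh_b : forall b, inhabited (ctm (TBase b)).
Proof.
  intro b. apply NNPP; intro hn.
  set (r := Lam (tEq (Var cty (Vz nil (TBase b))) (Var cty (Vz nil (TBase b))))
       : ctm (TArr (TBase b) TBool)).
  set (s := Lam (tNeg (tEq (Var cty (Vz nil (TBase b))) (Var cty (Vz nil (TBase b)))))
       : ctm (TArr (TBase b) TBool)).
  destruct (gaif _ _ r s (1/2)) as [l hl]; [lra|].
  destruct l as [|t l]; [|apply hn; constructor; exact t].
  unfold conjl in hl; simpl in hl. rewrite mu_top in hl.
  assert (H0 : mu (tEq r s) = 0).
  { apply mu_unsat. intros I HI. apply true_eq in HI. destruct (D_base_ne I b) as [y].
    assert (E := f_equal (fun f => tv I (ap I f y)) HI). unfold V, r, s in E. simpl in E.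
    rewrite !den_lam in E. unfold tEq, tNeg in E. rewrite !den_app in E. rewrite den_neg in E.
    assert (T1 : forall z : D I (TBase b),
      tv I (ap I (ap I (den I (EqC cty (TBase b :: nil) (TBase b)) (y, tt)) z) z) = true).
    { intros z. apply den_eq. reflexivity. }
    rewrite T1 in E. discriminate. }
  lra.
Qed.

Lemma ex_good : exists x, good x.
Proof.
  apply NNPP. intros H.
  assert (H1 : Meas.lam (fun x => Meas.U01 x /\ True) <= Meas.lam bad).
  { apply Meas.lam_mono.
    - apply Meas.Meas_and; [apply Meas.Meas_U01|apply Meas.Meas_True].
    - apply bad_meas.
    - intros x [Hx _]. apply NNPP. intros hb. apply H. exists x. split; auto. }
  assert (E : Meas.lam (fun x => Meas.U01 x /\ True) = 1).
  { transitivity (Meas.lam (fun _ => True)). apply (Meas.lam_restrict (fun _ => True)).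
    apply Meas.lam_total. }
  rewrite E, (proj2 bad_meas) in H1. lra.
Qed.

Definition TMx (x : R) (h : good x) : interp :=
  TM (Ux x) (Ux_fsat x (proj1 h)) (Ux_compl x (proj1 h)) (good_henk x h) inh_b.

Definition sx (x : R) (h : good x) : sep_interp cty :=
  exist _ (TMx x h) (TM_sep _ _ _ _ _).

Definition x0 : R := proj1_sig (constructive_indefinite_description _ ex_good).
Definition hx0 : good x0 := proj2_sig (constructive_indefinite_description _ ex_good).
Definition I0 : sep_interp cty := sx x0 hx0.

Definition g (x : R) : sep_interp cty :=
  match excluded_middle_informative (good x) with
  | left h => sx x h
  | right _ => I0
  end.

Lemma g_good x (h : good x) phi : Mod phi (g x) <-> Ux x phi.
Proof.
  unfold g. destruct (excluded_middle_informative (good x)) as [h'|h']; [|contradiction].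
  unfold Mod; simpl. apply TM_true.
Qed.

Lemma g_bad x : ~ good x -> forall phi, Mod phi (g x) <-> Mod phi I0.
Proof.
  intros hn phi. unfold g. destruct (excluded_middle_informative (good x)); [contradiction|].
  tauto.
Qed.

Definition SS (A : sep_interp cty -> Prop) : R -> Prop := fun x => Meas.U01 x /\ A (g x).

Lemma SS_Mod phi x : SS (Mod phi) x <->
  ((Uset phi x /\ ~ bad x) \/ ((Meas.U01 x /\ bad x) /\ Mod phi I0)).
Proof.
  unfold SS; split.
  - intros [Hx hm]. destruct (classic (good x)) as [h|h].
    + left. split; [split; auto; apply (g_good x h); auto| apply h].
    + right. split; [split; auto|].
      * apply NNPP; intros hb; apply h; split; auto.
      * apply (g_bad x h); auto.
  - intros [[[Hx hu] hnb]|[[Hx hb] hm]].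
    + split; auto. apply (g_good x (conj Hx hnb)); auto.
    + split; auto. apply g_bad; auto. intros [_ h]; auto.
Qed.

Lemma SS_Mod_meas phi : Meas.Meas (SS (Mod phi)).
Proof.
  eapply Meas.Meas_ext. intros x; symmetry; apply SS_Mod.
  apply Meas.Meas_or.
  - apply Meas.Meas_and; [apply Uset_meas|apply Meas.Meas_not; apply bad_meas].
  - apply Meas_cand. apply Meas.Meas_and; [apply Meas.Meas_U01| apply bad_meas].
Qed.

Lemma lam0_le (A : R -> Prop) : Meas.Meas A -> (forall x, A x -> bad x) -> Meas.lam A = 0.
Proof.
  intros hA hs. apply Rle_antisym; [|apply Meas.lam_ge0].
  rewrite <- (proj2 bad_meas). apply Meas.lam_mono; auto. apply bad_meas.
Qed.

Lemma P_Mod phi : Meas.lam (SS (Mod phi)) = mu phi.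
Proof.
  set (A1 := fun x => Uset phi x /\ ~ bad x).
  set (A2 := fun x => Meas.U01 x /\ bad x).
  assert (M1 : Meas.Meas A1) by (apply Meas.Meas_and; [apply Uset_meas|apply Meas.Meas_not; apply bad_meas]).
  assert (M2 : Meas.Meas A2) by (apply Meas.Meas_and; [apply Meas.Meas_U01| apply bad_meas]).
  assert (L2 : Meas.lam A2 = 0) by (apply lam0_le; auto; intros x [_ h]; auto).
  assert (D12 : Meas.lam (fun x => A1 x \/ A2 x) = Meas.lam A1).
  { rewrite Meas.lam_add; auto. lra. intros x [_ h1] [_ h2]; auto. }
  assert (Ha : Meas.lam A1 <= Meas.lam (SS (Mod phi))).
  { apply Meas.lam_mono; auto. apply SS_Mod_meas. intros x h. apply SS_Mod. left; auto. }
  assert (Hb : Meas.lam (SS (Mod phi)) <= Meas.lam (fun x => A1 x \/ A2 x)).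
  { apply Meas.lam_mono; auto. apply SS_Mod_meas. apply Meas.Meas_or; auto.
    intros x h. apply SS_Mod in h. destruct h as [h|[h _]]; [left|right]; auto. }
  assert (Hc : Meas.lam (Uset phi) = Meas.lam A1).
  { rewrite <- (Meas.lam_ext (fun x => A1 x \/ (Uset phi x /\ bad x))).
    - rewrite Meas.lam_add; auto.
      + rewrite (lam0_le (fun x => Uset phi x /\ bad x)). ring.
        apply Meas.Meas_and; [apply Uset_meas|apply bad_meas]. intros x [_ h]; auto.
      + apply Meas.Meas_and; [apply Uset_meas|apply bad_meas].
      + intros x [_ h1] [_ h2]; auto.
    - intros x. unfold A1. destruct (classic (bad x)); tauto. }
  rewrite (proj2 (Uset_meas phi)) in Hc. lra.
Qed.

Lemma SS_borel A : hat_borel cty A -> Meas.Meas (SS A).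
Proof.
  intros HA. apply (HA (fun A => Meas.Meas (SS A))).
  - split; [|split].
    + eapply Meas.Meas_ext; [|exact Meas.Meas_U01]. intros x; unfold SS; tauto.
    + intros A0 h. eapply Meas.Meas_ext; [|exact (Meas.Meas_and _ _ Meas.Meas_U01 (Meas.Meas_not _ h))].
      intros x; unfold SS; tauto.
    + intros F hF. eapply Meas.Meas_ext; [|exact (Meas.Meas_ex _ hF)].
      intros x; unfold SS; split; [intros [n [h1 h2]]; split; eauto| intros [h1 [n h2]]; eauto].
  - intros U [F HF].
    eapply Meas.Meas_ext; [|exact (Meas.Meas_ex _ (fun n => Meas_cand _ (F (e n)) (SS_Mod_meas (e n))))].
    intros x. unfold SS. split.
    + intros [n [[Hx hm] hf]]. split; auto. apply HF. eauto.
    + intros [Hx hU]. apply HF in hU. destruct hU as [phi [hf hm]].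
      destruct (e_surj phi) as [n <-]. exists n; auto.
Qed.

Definition Pm (A : sep_interp cty -> Prop) : R := Meas.lam (SS A).

Lemma Pm_prob : is_prob_measure (hat_borel cty) Pm.
Proof.
  split; [|split].
  - intros A _; apply Meas.lam_ge0.
  - unfold Pm, SS. transitivity (Meas.lam (fun _ => True)). apply (Meas.lam_restrict (fun _ => True)).
    apply Meas.lam_total.
  - intros F hF hd. unfold Pm.
    rewrite (Meas.lam_ext (SS (fun x => exists n, F n x)) (fun x => exists n, SS (F n) x)).
    + apply Meas.lam_sigma.
      * intros n; apply SS_borel; auto.
      * intros m n x hmn [_ h1] [_ h2]. eapply hd; eauto.
    + intros x; unfold SS; split; [intros [h1 [n h2]]; eauto| intros [n [h1 h2]]; split; eauto].
Qed.

Definition PiM (A : sep_interp cty -> Prop) : Prop := exists phi, A = Mod phi.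

Lemma PiM_int A B0 : PiM A -> PiM B0 -> PiM (fun x => A x /\ B0 x).
Proof.
  intros [phi ->] [psi ->]. exists (tAnd phi psi). apply pred_ext. intros I.
  unfold Mod. rewrite true_and. tauto.
Qed.

Lemma Mod_borel phi : hat_borel cty (Mod phi).
Proof.
  apply sigma_gen_base. exists (fun psi => psi = phi). intros I; split.
  - intros h; exists phi; auto.
  - intros [psi [-> h]]; auto.
Qed.

Lemma borel_sub A : hat_borel cty A -> sigma_gen PiM A.
Proof.
  intros HA. apply HA; [apply sigma_gen_sigma|].
  intros U [F HF].
  replace U with (fun I => exists n, F (e n) /\ Mod (e n) I).
  - apply (sigma_gen_sigma _ PiM). intros n. destruct (classic (F (e n))) as [h|h].
    + replace (fun I => F (e n) /\ Mod (e n) I) with (Mod (e n)).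
      * apply sigma_gen_base. exists (e n); auto.
      * apply pred_ext. intros I; tauto.
    + replace (fun I => F (e n) /\ Mod (e n) I) with (Empty (sep_interp cty)).
      * apply (sigma_gen_sigma _ PiM). apply (sigma_gen_sigma _ PiM).
      * apply pred_ext. intros I; unfold Empty; tauto.
  - apply pred_ext. intros I. rewrite HF. split.
    + intros [n [h1 h2]]; eauto.
    + intros [phi [h1 h2]]. destruct (e_surj phi) as [n <-]. eauto.
Qed.

Lemma Pm_unique (Q : (sep_interp cty -> Prop) -> R) :
  is_prob_measure (hat_borel cty) Q -> (forall phi, Q (Mod phi) = mu phi) ->
  forall A, hat_borel cty A -> Q A = Pm A.
Proof.
  intros hQ hQm A HA.
  assert (HSig := sigma_gen_sigma _ (@hat_open B C cty)).
  assert (HP := Pm_prob).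
  apply (dynkin _ PiM PiM_int (fun A => hat_borel cty A /\ Q A = Pm A)); [| |apply borel_sub; auto].
  - split; [|split].
    + split; [apply HSig|]. rewrite (proj1 (proj2 hQ)), (proj1 (proj2 HP)). auto.
    + intros A0 [h1 h2]. split; [apply HSig; auto|].
      rewrite (M_compl _ _ _ HSig hQ), (M_compl _ _ _ HSig HP); auto. rewrite h2; auto.
    + intros F hF hd. split; [apply HSig; intros n; apply hF|].
      apply (uniqueness_sum (fun n => Q (F n))).
      * apply hQ; auto. intros n; apply hF.
      * replace (fun n => Q (F n)) with (fun n => Pm (F n)).
        apply HP; auto. intros n; apply hF.
        apply functional_extensionality; intros n. symmetry; apply hF.
  - intros A0 [phi ->]. split; [apply Mod_borel|]. rewrite hQm. symmetry. apply P_Mod.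
Qed.

End Prob.

Lemma main_sec (HB : countable B) (HC : countable C) (mu : sentence -> R) :
  prob_on_sentences mu -> gaifman mu ->
  exists P : (sep_interp cty -> Prop) -> R,
    is_prob_measure (hat_borel cty) P /\
    (forall phi : sentence, P (Mod phi) = mu phi) /\
    (forall Q : (sep_interp cty -> Prop) -> R,
        is_prob_measure (hat_borel cty) Q ->
        (forall phi : sentence, Q (Mod phi) = mu phi) ->
        forall A, hat_borel cty A -> Q A = P A).
Proof.
  intros hp hg. destruct HB as [fB hB]. destruct HC as [fC hC].
  set (e := fun n => match excluded_middle_informative (exists phi : sentence, enc fB fC phi = n) with
                     | left h => proj1_sig (constructive_indefinite_description _ h)
                     | right _ => Top end).
  assert (e_surj : forall phi, exists n, e n = phi).
  { intros phi. exists (enc fB fC phi). unfold e. destruct (excluded_middle_informative _) as [h|h].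
    - destruct (constructive_indefinite_description _ h) as [psi hpsi]. simpl.
      apply (enc_sent_inj fB fC hB hC). auto.
    - exfalso; apply h; eauto. }
  exists (Pm mu hp e e_surj hg fB fC hB hC).
  split; [apply Pm_prob|split; [apply P_Mod| apply Pm_unique]].
Qed.

End Syn.

Theorem mainTheorem13 (B C : Type) (cty : C -> ty B)
  (HB : countable B) (HC : countable C) (mu : sentence cty -> R) :
  prob_on_sentences mu -> gaifman mu ->
  exists P : (sep_interp cty -> Prop) -> R,
    is_prob_measure (hat_borel cty) P /\
    (forall phi : sentence cty, P (Mod phi) = mu phi) /\
    (forall Q : (sep_interp cty -> Prop) -> R,
        is_prob_measure (hat_borel cty) Q ->
        (forall phi : sentence cty, Q (Mod phi) = mu phi) ->
        forall A, hat_borel cty A -> Q A = P A).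
Proof. exact (main_sec B C cty HB HC mu). Qed.
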